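(* Let $J_1,J_2\ge 0$ and $\beta\ge 0$. Then every infinite-volume Gibbs measure $\mu$ of the plaquette orbital model on $\mathbb Z^2$ at inverse temperature $\beta$ satisfies $\mathbb E_\mu(\mathbf S_{\boldsymbol r})=0$ for every $\boldsymbol r\in\mathbb Z^2$.
   Context: On $\mathbb Z^2$ (unit vectors $\boldsymbol e_1,\boldsymbol e_2$) nearest-neighbour edges are typed as follows: the horizontal edge $\langle \boldsymbol r,\boldsymbol r+\boldsymbol e_1\rangle$ is an $x$-edge if $r_1$ is even and a $z$-edge if $r_1$ is odd; the vertical edge $\langle\boldsymbol r,\boldsymbol r+\boldsymbol e_2\rangle$ is an $x$-edge if $r_2$ is even and a $z$-edge if $r_2$ is odd. Spins $\mathbf S_{\boldsymbol r}=(S^x_{\boldsymbol r},S^z_{\boldsymbol r})$ are unit vectors in $\mathbb R^2$, with a priori measure $\nu$ = uniform measure on the unit circle (normalized to total mass $\sqrt{2\pi}$). For finite $\Lambda\subset\mathbb Z^2$ let $\mathcal H_\Lambda(\mathbf S)=-J_1\sum S^x_{\boldsymbol r}S^x_{\boldsymbol r'}-J_2\sum S^z_{\boldsymbol r}S^z_{\boldsymbol r'}$, the first sum over $x$-edges and the second over $z$-edges having at least one endpoint in $\Lambda$. An infinite-volume Gibbs measure at inverse temperature $\beta$ is a probability measure $\mu$ on configurations $(\mathbf S_{\boldsymbol r})_{\boldsymbol r\in\mathbb Z^2}$ such that for every finite $\Lambda$, the conditional distribution of $(\mathbf S_{\boldsymbol r})_{\boldsymbol r\in\Lambda}$ given $(\mathbf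 S_{\boldsymbol r})_{\boldsymbol r\notin\Lambda}$ has density proportional to $e^{-\beta\mathcal H_\Lambda(\mathbf S)}$ with respect to $\prod_{\boldsymbol r\in\Lambda}\nu(d\mathbf S_{\boldsymbol r})$ (DLR condition). *)

(* Defs.v *)
From HB Require Import structures.
From mathcomp Require Import all_boot all_order all_algebra.
From mathcomp Require Import all_classical all_reals all_analysis.
Set Implicit Arguments. Unset Strict Implicit. Unset Printing Implicit Defensive.
Import Order.TTheory GRing.Theory Num.Theory.
Import numFieldNormedType.Exports.
Local Open Scope classical_set_scope.
Local Open Scope ring_scope.

(** Sites of Z^2 and spin configurations.  A spin S_r = (S^x_r, S^z_r) is
    stored as a pair in R*R (first component = x, second = z). *)
Definition site := (int * int)%type.
Definition spin_config (R : realType) := site -> (R * R)%type.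

Definition coord_sets (R : realType) : set (set (spin_config R)) :=
  [set A | exists (r : site) (B : set (R * R)%type),
     measurable B /\ A = (fun w : spin_config R => w r) @^-1` B].

Definition config (R : realType) := g_sigma_algebraType (@coord_sets R).

Definition bond_h (R : realType) (J1 J2 : R) (w : spin_config R) (b : site) : R :=
  let b' := (b.1 + 1, b.2)%R in
  if (2 %| b.1)%Z then - J1 * (w b).1 * (w b').1 else - J2 * (w b).2 * (w b').2.

Definition bond_v (R : realType) (J1 J2 : R) (w : spin_config R) (b : site) : R :=
  let b' := (b.1, b.2 + 1)%R in
  if (2 %| b.2)%Z then - J1 * (w b).1 * (w b').1 else - J2 * (w b).2 * (w b').2.

(** H_Lambda: sum over all edges having at least one endpoint in the finite
    set Lambda (given as a list of sites).  The horizontal edge <b,b+e1>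
    meets Lambda iff b \in Lambda or b + e1 \in Lambda, i.e. b \in Lambda or
    b \in Lambda - e1; similarly for vertical edges. *)
Definition hamiltonian (R : realType) (J1 J2 : R) (L : seq site)
    (w : spin_config R) : R :=
  \sum_(b <- undup (L ++ map (fun r : site => (r.1 - 1, r.2)%R) L)) bond_h J1 J2 w b
  + \sum_(b <- undup (L ++ map (fun r : site => (r.1, r.2 - 1)%R) L)) bond_v J1 J2 w b.

(** Integration against the a priori measure nu: uniform measure on the unit
    circle with total mass sqrt(2 pi), i.e. nu = (sqrt(2pi)/(2pi)) times the
    image of Lebesgue measure on [0, 2pi) under t |-> (cos t, sin t). *)
Definition nu_int (R : realType) (f : (R * R)%type -> \bar R) : \bar R :=
  ((Num.sqrt (2 * pi) / (2 * pi))%:E *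
   \int[lebesgue_measure]_(t in [set t : R | (0 <= t < 2 * pi)%R]) f (cos t, sin t))%E.

Definition upd (R : realType) (w : spin_config R) (r : site) (x : (R * R)%type)
  : spin_config R := fun r' => if r' == r then x else w r'.

(** Integral of F against prod_{r in s} nu(dS_r), the spins outside s being
    those of w (iterated integration; s is assumed duplicate-free). *)
Fixpoint nu_prod_int (R : realType) (s : seq site)
    (F : spin_config R -> \bar R) (w : spin_config R) : \bar R :=
  match s with
  | [::] => F w
  | r :: s' => nu_int (fun x => nu_prod_int s' F (upd w r x))
  end.

Definition spec_weight (R : realType) (J1 J2 beta : R) (L : seq site)
    (A : set (spin_config R)) (w : spin_config R) : \bar R :=
  nu_prod_int (undup L)
    (fun s => (\1_A s * expR (- beta * hamiltonian J1 J2 L s))%:E) w.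

(** Gibbs specification gamma_Lambda(A | w): the probability of A under the
    density proportional to exp(-beta H_Lambda) w.r.t. prod_{r in Lambda} nu,
    with boundary condition w outside Lambda.  (Numerator and partition
    function are finite and the latter positive, so [fine] is harmless.) *)
Definition gibbs_kernel (R : realType) (J1 J2 beta : R) (L : seq site)
    (A : set (spin_config R)) (w : spin_config R) : \bar R :=
  (fine (spec_weight J1 J2 beta L A w) /
   fine (spec_weight J1 J2 beta L setT w))%:E.

Definition outside_determined (R : realType) (L : seq site)
    (B : set (spin_config R)) : Prop :=
  forall w w' : spin_config R,
    (forall r, r \notin L -> w r = w' r) -> B w -> B w'.

(** DLR condition: for every finite Lambda, gamma_Lambda(. | w) is a version
    of the conditional distribution of mu given the spins outside Lambda:
    mu(A /\ B) = int_B gamma_Lambda(A | w) mu(dw) for all measurable A and all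
    measurable B determined by the spins outside Lambda. *)
Definition is_gibbs_measure (R : realType) (J1 J2 beta : R)
    (mu : probability (config R) R) : Prop :=
  forall (L : seq site) (A B : set (config R)),
    measurable A -> measurable B -> outside_determined L B ->
    mu (A `&` B) = (\int[mu]_(w in B) gibbs_kernel J1 J2 beta L A w)%E.

(* Main.v *)
Require Import Defs.
From HB Require Import structures.
From mathcomp Require Import all_boot all_order all_algebra.
From mathcomp Require Import all_classical all_reals all_analysis.
From mathcomp Require Import ring lra zify measurable_realfun.
Set Implicit Arguments. Unset Strict Implicit. Unset Printing Implicit Defensive.
Import Order.TTheory GRing.Theory Num.Theory.
Import numFieldNormedType.Exports.
Local Open Scope classical_set_scope.
Local Open Scope ring_scope.


Section invol.
Import HBNNSimple.
Local Open Scope ereal_scope.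
Context d (T : measurableType d) (R : realType) (mu : {measure set T -> \bar R}).
Variable phi : T -> T.
Hypothesis phiK : forall x, phi (phi x) = x.
Hypothesis mphi : forall A, measurable A -> measurable (phi @^-1` A).
Hypothesis muphi : forall A, measurable A -> mu (phi @^-1` A) = mu A.

Lemma nnint_invol_le (h : T -> \bar R) :
  ereal_sup [set sintegral mu (NonNegSimpleFun.sort k) | k in
     [set k : {nnsfun T >-> R} | forall x, ((k x)%:E <= h (phi x))%E]] <=
  ereal_sup [set sintegral mu (NonNegSimpleFun.sort k) | k in
     [set k : {nnsfun T >-> R} | forall x, ((k x)%:E <= h x)%E]].
Proof.
apply: ge_ereal_sup => _ [k /= kh <-].
have mk : measurable_fun [set: T] (k \o phi).
  move=> _ A mA; rewrite setTI.
  change (measurable (phi @^-1` (k @^-1` A))); apply: mphi.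
  exact: (measurable_funPTI k mA).
have fk : finite_set (range (k \o phi)).
  apply: sub_finite_set (fimfunP k) => _ [x _ <-]; by exists (phi x).
have nk : forall x, (0 <= (k \o phi) x)%R by move=> x; exact: fun_ge0.
pose kk : {nnsfun T >-> R} := HB.pack (k \o phi)
  (isMeasurableFun.Build _ _ _ _ (k \o phi) mk)
  (@FiniteImage.Build T R (k \o phi) fk)
  (@isNonNegFun.Build T R (k \o phi) nk).
apply: ereal_sup_ubound; exists kk.
  by move=> x /=; have := kh (phi x); rewrite phiK.
rewrite /sintegral; apply: eq_fsbigr => r _; congr (_ * _).
rewrite /=. change (mu (phi @^-1` (k @^-1` [set r])) = mu (k @^-1` [set r])).
by rewrite muphi.
Qed.

Lemma integral_invol (D : set T) (f : T -> \bar R) :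
  (forall x, D (phi x) = D x) ->
  \int[mu]_(x in D) f (phi x) = \int[mu]_(x in D) f x.
Proof.
move=> Dphi.
have E : (fun x => f (phi x)) \_ D = (f \_ D) \o phi.
  apply/funext => x; rewrite /patch /=.
  by rewrite (_ : (phi x \in D) = (x \in D)) //; apply/idP/idP; rewrite !in_setE Dphi.
rewrite /integral E.
have key : forall h : T -> \bar R,
  ereal_sup [set sintegral mu (NonNegSimpleFun.sort k) | k in
     [set k : {nnsfun T >-> R} | forall x, ((k x)%:E <= h (phi x))%E]] =
  ereal_sup [set sintegral mu (NonNegSimpleFun.sort k) | k in
     [set k : {nnsfun T >-> R} | forall x, ((k x)%:E <= h x)%E]].
  move=> h; apply/eqP; rewrite eq_le nnint_invol_le /=.
  have := nnint_invol_le (h \o phi).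
  have -> // : [set k : {nnsfun T >-> R} | forall x, ((k x)%:E <= (h \o phi) (phi x))%E] =
    [set k | forall x, ((k x)%:E <= h x)%E].
  by apply/seteqP; split=> k /= Hk x; have := Hk x; rewrite phiK.
congr (_ - _).
- rewrite funepos_comp; exact: key.
- rewrite funeneg_comp; exact: key.
Qed.
End invol.

Section refl.
Context (R : realType).

Lemma mrho (c : R) : measurable_fun [set: measurableTypeR R]
  ((fun t : R => c - t) : measurableTypeR R -> measurableTypeR R).
Proof. exact: (@measurable_realfun.measurable_funB _ _ _ _ (cst c) id). Qed.

Lemma rho_meas (c : R) (A : set R) : measurable A ->
  measurable ((fun t : R => c - t) @^-1` A).
Proof. by move=> mA; have := mrho c measurableT mA; rewrite setTI. Qed.

Lemma rho_leb (c : R) (A : set R) : measurable A ->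
  lebesgue_measure ((fun t => c - t) @^-1` A) = lebesgue_measure A.
Proof.
move=> mA.
have := @lebesgue_measure_unique R (measure_function_pushforward__canonical__measure_function_Measure lebesgue_measure (mrho c)).
move=> H; apply: esym; apply: (H _ A mA) => _ [[a b]] _ <-.
rewrite /= /pushforward.
have -> : (fun t : R => c - t) @^-1` `]a, b]%classic = `[c - b, c - a[%classic.
  apply/seteqP; split => t /=; rewrite !in_itv /= => /andP [h1 h2]; apply/andP; split; lra.
rewrite !lebesgue_measure_itv /= !lte_fin.
have -> : (c - b < c - a) = (a < b) by apply/idP/idP => h; lra.
case: ifP => // _; rewrite -!EFinD; congr (_%:E); lra.
Qed.

Definition phiC (t : R) : R :=
  if (0 <= t <= pi) then pi - t else if (pi < t < 2 * pi) then 3 * pi - t else t.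

Lemma phiC1 t : 0 <= t <= pi -> phiC t = pi - t.
Proof. by move=> h; rewrite /phiC h. Qed.
Lemma phiC2 t : pi < t < 2 * pi -> phiC t = 3 * pi - t.
Proof.
move=> /andP[h1 h2]; rewrite /phiC ifF ?ifT //; first by apply/andP.
by apply/negbTE/negP => /andP[]; lra.
Qed.
Lemma phiC3 t : ~~ (0 <= t <= pi) -> ~~ (pi < t < 2 * pi) -> phiC t = t.
Proof. by move=> h1 h2; rewrite /phiC (negbTE h1) (negbTE h2). Qed.

Lemma phiCK t : phiC (phiC t) = t.
Proof.
have pi0 := pi_gt0 R.
have [h1|h1] := boolP (0 <= t <= pi).
  rewrite (phiC1 h1) phiC1; first ring.
  by move/andP: h1 => [? ?]; apply/andP; split; lra.
have [h2|h2] := boolP (pi < t < 2 * pi).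
  rewrite (phiC2 h2) phiC2; first ring.
  by move/andP: h2 => [? ?]; apply/andP; split; lra.
by rewrite !(phiC3 h1 h2).
Qed.

Definition DC := [set t : R | (0 <= t < 2 * pi)%R].

Lemma DC_phiC t : DC (phiC t) = DC t.
Proof.
have pi0 := pi_gt0 R.
rewrite /DC /=; apply/propext.
have [h1|h1] := boolP (0 <= t <= pi).
  rewrite (phiC1 h1); move/andP: h1 => [? ?].
  by split => _; apply/andP; split; lra.
have [h2|h2] := boolP (pi < t < 2 * pi).
  rewrite (phiC2 h2); move/andP: h2 => [? ?].
  by split => _; apply/andP; split; lra.
by rewrite (phiC3 h1 h2).
Qed.

Lemma sinpi3 : sin (3 * pi) = 0 :> R.
Proof.
have -> : 3 * pi = pi + (pi + pi) :> R by ring.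
by rewrite (sinD pi (pi + pi)) (sinD pi pi) (cosD pi pi) sinpi cospi; ring.
Qed.
Lemma cospi3 : cos (3 * pi) = -1 :> R.
Proof.
have -> : 3 * pi = pi + (pi + pi) :> R by ring.
by rewrite (cosD pi (pi + pi)) (sinD pi pi) (cosD pi pi) sinpi cospi; ring.
Qed.

Lemma cos_phiC t : DC t -> cos (phiC t) = - cos t /\ sin (phiC t) = sin t.
Proof.
rewrite /DC /= => /andP[h0 h3].
have [h1|h1] := boolP (0 <= t <= pi).
  by rewrite (phiC1 h1) (cosB pi t) (sinB pi t) cospi sinpi; split; ring.
have [h2|h2] := boolP (pi < t < 2 * pi).
  by rewrite (phiC2 h2) (cosB (3 * pi) t) (sinB (3 * pi) t) cospi3 sinpi3; split; ring.
exfalso; move: h1 h2; rewrite !negb_and -!ltNge -!leNgt => /orP[]? /orP[]?; lra.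
Qed.

Definition S1 : set R := `[0, pi]%classic.
Definition S2 : set R := `]pi, 2 * pi[%classic.
Definition S0 : set R := ~` (S1 `|` S2).

Lemma mS1 : measurable S1. Proof. exact: measurable_itv. Qed.
Lemma mS2 : measurable S2. Proof. exact: measurable_itv. Qed.
Lemma mS0 : measurable S0. Proof. apply: measurableC; apply: measurableU; [exact: mS1|exact: mS2]. Qed.

Lemma S1E t : S1 t = (0 <= t <= pi). Proof. by rewrite /S1 /= in_itv. Qed.
Lemma S2E t : S2 t = (pi < t < 2 * pi). Proof. by rewrite /S2 /= in_itv. Qed.
Lemma S0E t : S0 t <-> (~~ (0 <= t <= pi) /\ ~~ (pi < t < 2 * pi)).
Proof.
rewrite /S0 /setC /setU /= S1E S2E; split.
  by move=> h; split; apply/negP => h'; apply: h; [left|right].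
by move=> [/negP h1 /negP h2] [].
Qed.

Lemma phiC_pre (A : set R) : phiC @^-1` A =
  (S0 `&` A) `|` ((fun t => pi - t) @^-1` (S1 `&` A)) `|` ((fun t => 3 * pi - t) @^-1` (S2 `&` A)).
Proof.
have pi0 := pi_gt0 R.
apply/seteqP; split => t /=.
- have [h1|h1] := boolP (0 <= t <= pi).
    rewrite (phiC1 h1) => HA; left; right; split => //; rewrite S1E.
    by move/andP: h1 => [? ?]; apply/andP; split; lra.
  have [h2|h2] := boolP (pi < t < 2 * pi).
    rewrite (phiC2 h2) => HA; right; split => //; rewrite S2E.
    by move/andP: h2 => [? ?]; apply/andP; split; lra.
  by rewrite (phiC3 h1 h2) => HA; left; left; split => //; apply/S0E.
- move=> [[[/S0E [h1 h2] HA]|[]]|[]].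
  + by rewrite (phiC3 h1 h2).
  + rewrite S1E => /andP[? ?] HA; rewrite phiC1 //; apply/andP; split; lra.
  + rewrite S2E => /andP[? ?] HA; rewrite phiC2 //; apply/andP; split; lra.
Qed.

Lemma A_split (A : set R) : A = (S0 `&` A) `|` (S1 `&` A) `|` (S2 `&` A).
Proof.
apply/seteqP; split => t /=; last by move=> [[[]|[]]|[]].
move=> HA; have [h1|h1] := boolP (0 <= t <= pi); first by left; right; rewrite S1E.
have [h2|h2] := boolP (pi < t < 2 * pi); first by right; rewrite S2E.
by left; left; split => //; apply/S0E.
Qed.

Lemma phiC_meas (A : set R) : measurable A -> measurable (phiC @^-1` A).
Proof.
move=> mA; rewrite phiC_pre; apply: measurableU; [apply: measurableU|].
- by apply: measurableI => //; exact: mS0.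
- by apply: rho_meas; apply: measurableI => //; exact: mS1.
- by apply: rho_meas; apply: measurableI => //; exact: mS2.
Qed.

Lemma phiC_leb (A : set R) : measurable A ->
  lebesgue_measure (phiC @^-1` A) = lebesgue_measure A.
Proof.
have pi0 := pi_gt0 R.
move=> mA; rewrite phiC_pre [in RHS](A_split A).
have m0 : measurable (S0 `&` A) by apply: measurableI => //; exact: mS0.
have m1 : measurable (S1 `&` A) by apply: measurableI => //; exact: mS1.
have m2 : measurable (S2 `&` A) by apply: measurableI => //; exact: mS2.
rewrite !measureU //.
- by congr (_ + _ + _); [exact: rho_leb | exact: rho_leb].
- apply/seteqP; split => t //= [[/S0E [h1 _] _] [h _]].
  by rewrite S1E in h; rewrite h in h1.
- exact: measurableU.
- apply/seteqP; split => t //= [[[/S0E [_ h2] _]|[h1 _]] [h _]]; rewrite S2E in h.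
    by rewrite h in h2.
  by rewrite S1E in h1; move/andP: h1 => [? ?]; move/andP: h => [? ?]; lra.
- exact: rho_meas.
- apply/seteqP; split => t //= [[/S0E [h1 _] _] [h _]].
  rewrite S1E in h; move/andP: h => [? ?]; move/negP: h1; apply; apply/andP; split; lra.
- by apply: measurableU => //; exact: rho_meas.
- exact: rho_meas.
- apply/seteqP; split => t //= [[[/S0E [_ h2] _]|[h1 _]] [h _]]; rewrite S2E in h;
    move/andP: h => [? ?].
    move/negP: h2; apply; apply/andP; split; lra.
  by rewrite S1E in h1; move/andP: h1 => [? ?]; lra.
Qed.

Lemma nu_flip_int (F : R -> \bar R) :
  (\int[lebesgue_measure]_(t in [set t : R | (0 <= t < 2 * pi)%R]) F (phiC t) =
   \int[lebesgue_measure]_(t in [set t : R | (0 <= t < 2 * pi)%R]) F t)%E.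
Proof.
apply: integral_invol.
- exact: phiCK.
- exact: phiC_meas.
- exact: phiC_leb.
- exact: DC_phiC.
Qed.

Definition phiS (t : R) : R := if (0 < t < 2 * pi) then 2 * pi - t else t.

Lemma phiSK t : phiS (phiS t) = t.
Proof.
have pi0 := pi_gt0 R.
rewrite /phiS; have [h|h] := boolP (0 < t < 2 * pi).
  rewrite ifT; first ring.
  by move/andP: h => [? ?]; apply/andP; split; lra.
by rewrite (negbTE h).
Qed.

Lemma DC_phiS t : DC (phiS t) = DC t.
Proof.
have pi0 := pi_gt0 R.
rewrite /DC /phiS /=; apply/propext.
have [h|h] := boolP (0 < t < 2 * pi) => //.
move/andP: h => [? ?]; by split => _; apply/andP; split; lra.
Qed.

Lemma cos_phiS t : DC t -> cos (phiS t) = cos t /\ sin (phiS t) = - sin t.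
Proof.
rewrite /DC /= /phiS => /andP[h0 h3].
have c2 : cos (2 * pi) = 1 :> R.
  have -> : 2 * pi = pi + pi :> R by ring.
  by rewrite (cosD pi pi) sinpi cospi; ring.
have s2 : sin (2 * pi) = 0 :> R.
  have -> : 2 * pi = pi + pi :> R by ring.
  by rewrite (sinD pi pi) sinpi cospi; ring.
have [h|h] := boolP (0 < t < 2 * pi).
  by rewrite (cosB (2 * pi) t) (sinB (2 * pi) t) c2 s2; split; ring.
have -> : t = 0.
  move: h; rewrite negb_and -!leNgt => /orP[] ?; lra.
by rewrite sin0 oppr0.
Qed.

Definition S3 : set R := `]0, 2 * pi[%classic.
Lemma mS3 : measurable S3. Proof. exact: measurable_itv. Qed.
Lemma S3E t : S3 t = (0 < t < 2 * pi). Proof. by rewrite /S3 /= in_itv. Qed.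

Lemma phiS_pre (A : set R) : phiS @^-1` A =
  (~` S3 `&` A) `|` ((fun t => 2 * pi - t) @^-1` (S3 `&` A)).
Proof.
have pi0 := pi_gt0 R.
apply/seteqP; split => t /=; rewrite /phiS.
- have [h|h] := boolP (0 < t < 2 * pi) => HA.
    right; split => //; rewrite S3E.
    by move/andP: h => [? ?]; apply/andP; split; lra.
  by left; split => //; rewrite S3E; apply/negP; rewrite (negbTE h).
- move=> [[h HA]|[h HA]].
    by move: h; rewrite S3E => /negP h; rewrite (negbTE h).
  move: h; rewrite S3E => /andP[? ?]; rewrite ifT //; apply/andP; split; lra.
Qed.

Lemma A_split3 (A : set R) : A = (~` S3 `&` A) `|` (S3 `&` A).
Proof.
apply/seteqP; split => t /=; last by move=> [[]|[]].
by move=> HA; have [h|h] := pselect (S3 t); [right|left].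
Qed.

Lemma phiS_meas (A : set R) : measurable A -> measurable (phiS @^-1` A).
Proof.
move=> mA; rewrite phiS_pre; apply: measurableU.
- by apply: measurableI => //; apply: measurableC; exact: mS3.
- by apply: rho_meas; apply: measurableI => //; exact: mS3.
Qed.

Lemma phiS_leb (A : set R) : measurable A ->
  lebesgue_measure (phiS @^-1` A) = lebesgue_measure A.
Proof.
have pi0 := pi_gt0 R.
move=> mA; rewrite phiS_pre [in RHS](A_split3 A).
have m0 : measurable (~` S3 `&` A) by apply: measurableI => //; apply: measurableC; exact: mS3.
have m1 : measurable (S3 `&` A) by apply: measurableI => //; exact: mS3.
rewrite !measureU //.
- by congr (_ + _); exact: rho_leb.
- by apply/seteqP; split => t //= [[h _] [h' _]].
- exact: rho_meas.
- apply/seteqP; split => t //= [[h _] [h' _]]; apply: h; move: h'.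
  rewrite !S3E => /andP[? ?]; apply/andP; split; lra.
Qed.

Lemma nu_flip_intS (F : R -> \bar R) :
  (\int[lebesgue_measure]_(t in [set t : R | (0 <= t < 2 * pi)%R]) F (phiS t) =
   \int[lebesgue_measure]_(t in [set t : R | (0 <= t < 2 * pi)%R]) F t)%E.
Proof.
apply: integral_invol.
- exact: phiSK.
- exact: phiS_meas.
- exact: phiS_leb.
- exact: DC_phiS.
Qed.
End refl.
Section model.
Context (R : realType).
Local Notation cfg := (spin_config R).

Lemma nu_int_flip_gen (phi : R -> R) (fl : R * R -> R * R) :
  (forall F : R -> \bar R,
    (\int[lebesgue_measure]_(t in [set t : R | (0 <= t < 2 * pi)%R]) F (phi t) =
     \int[lebesgue_measure]_(t in [set t : R | (0 <= t < 2 * pi)%R]) F t)%E) ->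
  (forall t, DC t -> (cos (phi t), sin (phi t)) = fl (cos t, sin t)) ->
  forall Psi : R * R -> \bar R, nu_int (fun x => Psi (fl x)) = nu_int Psi.
Proof.
move=> hinv hcs Psi; rewrite /nu_int; congr (_ * _)%E.
rewrite -(hinv (fun t => Psi (cos t, sin t))).
apply: eq_integral => t; rewrite inE => Dt /=.
by rewrite hcs.
Qed.

Definition fl1 (x : R * R) : R * R := (- x.1, x.2).
Definition fl2 (x : R * R) : R * R := (x.1, - x.2).

Lemma hfl1 (Psi : R * R -> \bar R) : nu_int (fun x => Psi (fl1 x)) = nu_int Psi.
Proof.
apply: (@nu_int_flip_gen (@phiC R)); first exact: nu_flip_int.
by move=> t Dt; have [-> ->] := cos_phiC Dt.
Qed.

Lemma hfl2 (Psi : R * R -> \bar R) : nu_int (fun x => Psi (fl2 x)) = nu_int Psi.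
Proof.
apply: (@nu_int_flip_gen (@phiS R)); first exact: nu_flip_intS.
by move=> t Dt; have [-> ->] := cos_phiS Dt.
Qed.

Definition TP (fl : R * R -> R * R) (P : seq site) (w : cfg) : cfg :=
  fun r' => if r' \in P then fl (w r') else w r'.
Definition Fp (fl : R * R -> R * R) (p : site) (w : cfg) : cfg :=
  upd w p (fl (w p)).

Lemma L3 fl p s (G : cfg -> \bar R) v : p \notin s ->
  nu_prod_int s (fun u => G (Fp fl p u)) v = nu_prod_int s G (Fp fl p v).
Proof.
elim: s v => [|q s IH] v //=.
rewrite inE negb_or => /andP[pq ps].
congr (nu_int _); apply/funext => x; rewrite IH //.
congr nu_prod_int; apply/funext => r'; rewrite /Fp /upd.
have [-> | rp] := eqVneq r' p.
  by rewrite (negbTE pq).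
by case: (r' == q).
Qed.

Lemma L2 fl (hfl : forall Psi : R * R -> \bar R, nu_int (fun x => Psi (fl x)) = nu_int Psi)
  p s (G : cfg -> \bar R) w : p \in s ->
  nu_prod_int s (fun u => G (Fp fl p u)) w = nu_prod_int s G w.
Proof.
elim: s w => [|q s IH] w //=.
rewrite inE; have [ps _|ps] := boolP (p \in s).
  by congr (nu_int _); apply/funext => x; exact: IH.
rewrite orbF => /eqP pq; subst q.
transitivity (nu_int (fun x => nu_prod_int s G (upd w p (fl x)))); last first.
  exact: (hfl (fun x => nu_prod_int s G (upd w p x))).
congr (nu_int _); apply/funext => x; rewrite L3 //.
congr nu_prod_int; apply/funext => r'; rewrite /Fp /upd.
by case: (r' == p) => //; rewrite eqxx.
Qed.

Lemma L_TP fl (hfl : forall Psi : R * R -> \bar R, nu_int (fun x => Psi (fl x)) = nu_int Psi)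
  (P : seq site) s : uniq P -> {subset P <= s} ->
  forall (G : cfg -> \bar R) w,
  nu_prod_int s (fun u => G (TP fl P u)) w = nu_prod_int s G w.
Proof.
elim: P => [|p P IH] /=.
  move=> _ _ G w; congr nu_prod_int; apply/funext => u; congr G.
move=> /andP[pP uP] sub G w.
have E : forall u, TP fl (p :: P) u = Fp fl p (TP fl P u).
  move=> u; apply/funext => r'; rewrite /TP /Fp /upd inE.
  have [-> | rp] := eqVneq r' p; first by rewrite (negbTE pP).
  by [].
under eq_fun do rewrite E.
have sub' : {subset P <= s} by move=> x xP; apply: sub; rewrite inE xP orbT.
rewrite (IH uP sub' (fun u => G (Fp fl p u))).
by apply: L2 => //; apply: sub; rewrite inE eqxx.
Qed.

Lemma int_even (x : int) : (2 %| x)%Z -> exists m, x = 2 * m.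
Proof. move=> /dvdzP [m ->]; exists m; lia. Qed.
Lemma int_split (x : int) : exists k, x = 2 * k \/ x = 2 * k + 1.
Proof.
exists (x %/ 2)%Z; have := divz_eq x 2.
have := @modz_ge0 x 2 isT; have := @ltz_pmod x 2 isT; lia.
Qed.
Lemma int_odd (x : int) : ~~ (2 %| x)%Z -> exists m, x = 2 * m + 1.
Proof.
move=> H; have [k [h|h]] := int_split x; last by exists k.
by exfalso; move/negP: H; apply; apply/dvdzP; exists k; rewrite h mulrC.
Qed.

Definition P1 (k l : int) : seq site :=
  [:: (2 * k, 2 * l); (2 * k + 1, 2 * l); (2 * k, 2 * l + 1); (2 * k + 1, 2 * l + 1)].
Definition P2 (k l : int) : seq site :=
  [:: (2 * k + 1, 2 * l + 1); (2 * k + 2, 2 * l + 1); (2 * k + 1, 2 * l + 2); (2 * k + 2, 2 * l + 2)].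

Lemma uniq_P1 k l : uniq (P1 k l).
Proof. rewrite /P1 /= !inE !xpair_eqE; lia. Qed.
Lemma uniq_P2 k l : uniq (P2 k l).
Proof. rewrite /P2 /= !inE !xpair_eqE; lia. Qed.

Lemma ham_T1 k l J1 J2 L (w : cfg) :
  hamiltonian J1 J2 L (TP fl1 (P1 k l) w) = hamiltonian J1 J2 L w.
Proof.
rewrite /hamiltonian; congr (_ + _); apply: eq_bigr => -[b1 b2] _.
- rewrite /bond_h /TP /=; case: ifP => H.
    have [m hm] := int_even H.
    have -> : ((b1 + 1, b2) \in P1 k l) = ((b1, b2) \in P1 k l).
      by rewrite /P1 !inE !xpair_eqE hm; lia.
    by case: ifP => _ //=; ring.
  by case: ifP; case: ifP.
- rewrite /bond_v /TP /=; case: ifP => H.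
    have [m hm] := int_even H.
    have -> : ((b1, b2 + 1) \in P1 k l) = ((b1, b2) \in P1 k l).
      by rewrite /P1 !inE !xpair_eqE hm; lia.
    by case: ifP => _ //=; ring.
  by case: ifP; case: ifP.
Qed.

Lemma ham_T2 k l J1 J2 L (w : cfg) :
  hamiltonian J1 J2 L (TP fl2 (P2 k l) w) = hamiltonian J1 J2 L w.
Proof.
rewrite /hamiltonian; congr (_ + _); apply: eq_bigr => -[b1 b2] _.
- rewrite /bond_h /TP /=; case: ifP => H.
    by case: ifP; case: ifP.
  have [m hm] := int_odd (negbT H).
  have -> : ((b1 + 1, b2) \in P2 k l) = ((b1, b2) \in P2 k l).
    by rewrite /P2 !inE !xpair_eqE hm; lia.
  by case: ifP => _ //=; ring.
- rewrite /bond_v /TP /=; case: ifP => H.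
    by case: ifP; case: ifP.
  have [m hm] := int_odd (negbT H).
  have -> : ((b1, b2 + 1) \in P2 k l) = ((b1, b2) \in P2 k l).
    by rewrite /P2 !inE !xpair_eqE hm; lia.
  by case: ifP => _ //=; ring.
Qed.

Lemma spec_T fl (hfl : forall Psi : R * R -> \bar R, nu_int (fun x => Psi (fl x)) = nu_int Psi)
  (P : seq site) J1 J2 beta (L : seq site) (C : set cfg) (w : cfg) :
  uniq P -> {subset P <= L} ->
  (forall s, hamiltonian J1 J2 L (TP fl P s) = hamiltonian J1 J2 L s) ->
  spec_weight J1 J2 beta L (TP fl P @^-1` C) w = spec_weight J1 J2 beta L C w.
Proof.
move=> uP sub hH; rewrite /spec_weight.
have sub' : {subset P <= undup L} by move=> x xP; rewrite mem_undup; exact: sub.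
rewrite -(L_TP hfl uP sub' (fun s => (\1_C s * expR (- beta * hamiltonian J1 J2 L s))%:E) w).
congr nu_prod_int; apply/funext => s; rewrite hH.
by rewrite /indic.
Qed.

Lemma coord_meas (r : site) : measurable_fun [set: config R] (fun w : config R => w r).
Proof.
move=> _ B mB; rewrite setTI; apply: sub_sigma_algebra.
by exists r, B.
Qed.

Lemma TP_meas fl (P : seq site) : measurable_fun [set: R * R] fl ->
  measurable_fun [set: config R] (TP fl P : config R -> config R).
Proof.
move=> mfl.
have := @measurability _ _ (config R) (config R) setT (TP fl P) (@coord_sets R).
move=> H; apply: H; first by [].
move=> _ [A [r [B [mB ->]]] <-]; rewrite setTI; apply: sub_sigma_algebra.
exists r, (if r \in P then fl @^-1` B else B); split.
  by case: ifP => _ //; have := mfl measurableT _ mB; rewrite setTI.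
by apply/seteqP; split => w /=; rewrite /TP; case: ifP.
Qed.

Lemma mu_T fl (hfl : forall Psi : R * R -> \bar R, nu_int (fun x => Psi (fl x)) = nu_int Psi)
  (P : seq site) J1 J2 beta (mu : probability (config R) R) (C : set (config R)) :
  uniq P ->
  (forall L s, hamiltonian J1 J2 L (TP fl P s) = hamiltonian J1 J2 L s) ->
  is_gibbs_measure J1 J2 beta mu -> measurable C ->
  measurable ((TP fl P : config R -> config R) @^-1` C) ->
  mu ((TP fl P : config R -> config R) @^-1` C) = mu C.
Proof.
move=> uP hH G mC mTC.
have od : outside_determined P (setT : set (config R)) by [].
have h1 := G P _ _ mTC measurableT od.
have h2 := G P _ _ mC measurableT od.
rewrite !setIT in h1 h2; rewrite h1 h2.
apply: eq_integral => w _.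
by rewrite /gibbs_kernel spec_T.
Qed.

Lemma circle J1 J2 beta (mu : probability (config R) R) (g : R * R -> R) (r : site) :
  measurable_fun [set: R * R] g -> (forall t, `|g (cos t, sin t)| <= 1) ->
  is_gibbs_measure J1 J2 beta mu ->
  measurable [set w : config R | 1 < `|g (w r)|] /\
  mu [set w : config R | 1 < `|g (w r)|] = 0%E.
Proof.
move=> mg hg G.
set E := [set w : config R | 1 < `|g (w r)|].
have mE : measurable E.
  apply: sub_sigma_algebra; exists r, [set x | 1 < `|g x|]; split => //.
  have mh : measurable_fun [set: R * R] (fun x => `|g x|).
    exact: measurableT_comp.
  have := mh measurableT _ (@measurable_itv _ `]1, +oo[); rewrite setTI.
  congr measurable; apply/seteqP; split => x /=; rewrite in_itv /= andbT //.
split => //.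
have od : outside_determined [:: r] (setT : set (config R)) by [].
have h := G [:: r] _ _ mE measurableT od.
rewrite setIT in h; rewrite h.
transitivity (\int[mu]_(w in setT) (cst 0%E) w)%E; last by rewrite integral0.
apply: eq_integral => w _.
rewrite /gibbs_kernel /spec_weight /= /nu_int.
rewrite (_ : (\int[lebesgue_measure]_(t in _) _ = 0)%E); first by rewrite mule0 /= mul0r.
transitivity (\int[lebesgue_measure]_(t in [set t : R | (0 <= t < 2 * pi)%R]) (cst 0%E) t)%E;
  last by rewrite integral0.
apply: eq_integral => t _ /=.
rewrite indicE memNset ?mul0r //= /E /= /upd.
rewrite (_ : (r == r) = true) ?eqxx // => h'.
by have := hg t; rewrite leNgt h'.
Qed.

Lemma int_comp J1 J2 beta (mu : probability (config R) R) (g : R * R -> R) (r : site) :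
  measurable_fun [set: R * R] g -> (forall t, `|g (cos t, sin t)| <= 1) ->
  is_gibbs_measure J1 J2 beta mu ->
  measurable_fun [set: config R] (fun w : config R => ((g (w r))%:E : \bar R)) /\
  mu.-integrable [set: config R] (fun w : config R => ((g (w r))%:E : \bar R)).
Proof.
move=> mg hg G.
have [mE E0] := circle r mg hg G.
have mf : measurable_fun [set: config R] (fun w : config R => ((g (w r))%:E : \bar R)).
  apply/measurable_EFinP; apply: measurableT_comp mg _; exact: coord_meas.
split => //; apply/integrableP; split => //.
apply: (@le_lt_trans _ _ (\int[mu]_(x in setT) (cst 1%E) x)%E).
  apply: ae_ge0_le_integral => //.
  - exact: measurableT_comp.
  - exists [set w : config R | 1 < `|g (w r)|]; split => //.
    move=> w /= h; rewrite ltNge; apply/negP => h'; apply: h => _.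
    by rewrite lee_fin.
rewrite integral_cst // mul1e; have := probability_setT mu; move=> /= ->.
exact: ltry.
Qed.

Lemma comp_zero fl (hfl : forall Psi : R * R -> \bar R, nu_int (fun x => Psi (fl x)) = nu_int Psi)
  (P : seq site) J1 J2 beta (mu : probability (config R) R) (g : R * R -> R) (r : site) :
  measurable_fun [set: R * R] fl ->
  measurable_fun [set: R * R] g -> (forall t, `|g (cos t, sin t)| <= 1) ->
  uniq P ->
  (forall L s, hamiltonian J1 J2 L (TP fl P s) = hamiltonian J1 J2 L s) ->
  r \in P -> (forall x, g (fl x) = - g x) ->
  is_gibbs_measure J1 J2 beta mu ->
  (\int[mu]_w ((g ((w : spin_config R) r))%:E : \bar R) = 0)%E.
Proof.
move=> mfl mg hg uP hH rP hflg G.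
have [mf intf] := int_comp r mg hg G.
have mT := TP_meas P mfl.
have inv : forall A, measurable A -> mu A = pushforward mu (TP fl P : config R -> config R) A.
  move=> A mA; rewrite /pushforward; symmetry.
  have mTA : measurable ((TP fl P : config R -> config R) @^-1` A).
    by have := mT measurableT _ mA; rewrite setTI.
  exact: (mu_T hfl uP hH G mA mTA).
have e2 : forall w : config R, ((g ((TP fl P w) r))%:E : \bar R) = (- (g (w r))%:E)%E.
  by move=> w; rewrite /TP rP hflg EFinN.
have fI := integrable_fin_num measurableT intf.
have key : forall x : \bar R, x \is a fin_num -> x = (- x)%E -> x = 0%E.
  case=> //= x _ [] h; congr (_%:E); lra.
apply: key => //.
rewrite {1}(eq_measure_integral (pushforward mu (TP fl P : config R -> config R))); last first.
  by move=> A mA _; exact: inv.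
rewrite integral_pushforward //; last first.
  rewrite preimage_setT; apply: eq_integrable (integrableN intf) => //.
  by move=> w _ /=; rewrite e2.
rewrite preimage_setT.
rewrite -integralN; last first.
  apply: fin_num_adde_defl; rewrite fin_numN.
  by apply: integrable_fin_num => //; exact: integrable_funeneg.
by apply: eq_integral => w _ /=; rewrite e2.
Qed.
End model.

Unset Implicit Arguments.
Theorem theorem2p2 (R : realType) (J1 J2 beta : R)
  (hJ1 : 0 <= J1) (hJ2 : 0 <= J2) (hbeta : 0 <= beta)
  (mu : probability (config R) R) :
  is_gibbs_measure J1 J2 beta mu ->
  forall r : site,
    (\int[mu]_w ((w : spin_config R) r).1%:E = 0)%E /\
    (\int[mu]_w ((w : spin_config R) r).2%:E = 0)%E.
Proof.
move=> G [r1 r2]; split.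
- have [k hk] := int_split r1; have [l hl] := int_split r2.
  apply: (@comp_zero R (@fl1 R) (@hfl1 R) (P1 k l) J1 J2 beta mu fst (r1, r2)).
  + apply: measurable_fun_pair => //.
    exact: measurableT_comp (@measurable_realfun.oppr_measurable R setT) measurable_fst.
  + exact: measurable_fst.
  + by move=> t; exact: cos_max.
  + exact: uniq_P1.
  + by move=> L s; exact: ham_T1.
  + by rewrite /P1 !inE !xpair_eqE; lia.
  + by [].
  + exact: G.
- have [k hk] := int_split (r1 - 1); have [l hl] := int_split (r2 - 1).
  apply: (@comp_zero R (@fl2 R) (@hfl2 R) (P2 k l) J1 J2 beta mu snd (r1, r2)).
  + apply: measurable_fun_pair => //.
    exact: measurableT_comp (@measurable_realfun.oppr_measurable R setT) measurable_snd.
  + exact: measurable_snd.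
  + by move=> t; exact: sin_max.
  + exact: uniq_P2.
  + by move=> L s; exact: ham_T2.
  + by rewrite /P2 !inE !xpair_eqE; lia.
  + by [].
  + exact: G.
Qed.
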